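(* Let $S$ be a simple $(l,r)$-framed algebra, $\lambda^1,\lambda^2\in\mathrm{IS}^{(l,r)}$, $a_1\in S_{\lambda^1}$, $a_2\in S_{\lambda^2}$. If $a_1\cdot a_2=0$, then $a_1=0$ or $a_2=0$.
   Context: Let $\mathrm{IS}=\{0,\frac12,\frac1{16}\}$ with fusion rule $\star$ (values are subsets): $0\star h=h\star0=\{h\}$, $\frac12\star\frac12=\{0\}$, $\frac12\star\frac1{16}=\frac1{16}\star\frac12=\{\frac1{16}\}$, $\frac1{16}\star\frac1{16}=\{0,\frac12\}$; $A(h_0,h_1,h_2,h_3)=\{h: h\in h_2\star h_3,\ h_0\in h_1\star h\}$. For $h\in A(h_0,h_1,h_2,h_3)$, $h'\in A(h_0,h_2,h_1,h_3)$ define $B^{h,h'}_{h_0,h_1,h_2,h_3}$: $B_{*,0,*,*}=B_{*,*,0,*}=1$; $B_{*,\frac12,\frac12,*}=-1$; $B_{a,\frac12,\frac1{16},a'}=B_{a,\frac1{16},\frac12,a'}=i$ if $a$ or $a'$ is $\frac12$, else $-i$; $B^{b,b'}_{a,\frac1{16},\frac1{16},a'}=e^{-\pi i/8}\cdot\{1$ if $a,a'\ne\frac1{16},a=a'$; $i$ if $a,a'\neq\frac1{16},a\ne a'$; $\frac{1+i}2$ if $a=a'=\frac1{16},b=b'$; $\frac{1-i}2$ if $a=a'=\frac1{16},b\neq b'\}$. $\mathrm{IS}^{(l,r)}=\mathrm{IS}^l\times\mathrm{IS}^r$, $\lambda=(h_1,..,h_l,\bar h_1,..,\bar h_r)$,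 $s(\lambda)=\sum h_i-\sum\bar h_j$; $\star$, $A$ componentwise; $B^{\lambda,\lambda'}_{\lambda^0,\dots,\lambda^3}=\prod_{i\le l}B^{h_i,h'_i}_{h^0_i,\dots,h^3_i}\prod_{j\le r}\overline{B^{\bar h_j,\bar h'_j}_{\bar h^0_j,\dots,\bar h^3_j}}$. An $(l,r)$-framed algebra: finite-dimensional $\mathrm{IS}^{(l,r)}$-graded $S=\bigoplus S_\lambda$ over $\mathbb{C}$ with bilinear product, nonzero $1\in S_0$, $a\cdot_\lambda b$ the $S_\lambda$-component of $a\cdot b$, satisfying (FA1) $S_\lambda=0$ unless $s(\lambda)\in\mathbb{Z}$; (FA2) $S_0=\mathbb{C}1$, $1$ a two-sided unit; (FA3) $S_{\lambda^1}\cdot S_{\lambda^2}\subset\bigoplus_{\lambda\in\lambda^1\star\lambda^2}S_\lambda$; (FA4) $a_2\cdot_{\lambda^0}(a_1\cdot_{\lambda'}a_3)=\sum_{\lambda\in A(\lambda^0,\lambda^1,\lambda^2,\lambda^3)}B^{\lambda,\lambda'}_{\lambda^0,\lambda^1,\lambda^2,\lambda^3}a_1\cdot_{\lambda^0}(a_2\cdot_\lambda a_3)$ for $a_i\in S_{\lambda^i}$, $\lambda'\in A(\lambda^0,\lambda^2,\lambda^1,\lambda^3)$. An ideal is a graded subspace $M$ with $S\cdot M\subset M$; $S$ is simple if its only ideals are $0$ and $S$. *)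

(* Defs.v *)
From HB Require Import structures.
From mathcomp Require Import all_boot all_order all_algebra.
From mathcomp Require Import complex.
From mathcomp Require Import reals trigo.

Set Implicit Arguments.
Unset Strict Implicit.
Unset Printing Implicit Defensive.

Import Order.TTheory GRing.Theory Num.Theory.
Local Open Scope ring_scope.

Inductive IS := IS0 | IShalf | IS16.

Definition IS_eqb (a b : IS) : bool :=
  match a, b with
  | IS0, IS0 | IShalf, IShalf | IS16, IS16 => true
  | _, _ => false
  end.
Lemma IS_eqP : Equality.axiom IS_eqb.
Proof. by case; case; constructor. Qed.
HB.instance Definition _ := hasDecEq.Build IS IS_eqP.

Definition IS_code (h : IS) : nat :=
  match h with IS0 => 0 | IShalf => 1 | IS16 => 2 end.
Definition IS_decode (i : nat) : IS :=
  match i with 0 => IS0 | 1 => IShalf | _ => IS16 end.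
Lemma IS_codeK : cancel IS_code IS_decode.
Proof. by case. Qed.
HB.instance Definition _ := Countable.copy IS (can_type IS_codeK).
Definition IS_enum := [:: IS0; IShalf; IS16].
Lemma IS_enumP : Finite.axiom IS_enum. Proof. by case. Qed.
HB.instance Definition _ := isFinite.Build IS IS_enumP.

Definition weight (h : IS) : rat :=
  match h with IS0 => 0 | IShalf => 1 / 2 | IS16 => 1 / 16 end.

(* fusion rule: [fusIS h1 h2 h] <=> h \in h1 * h2 *)
Definition fusIS (h1 h2 h : IS) : bool :=
  match h1, h2 with
  | IS0, _ => h == h2
  | _, IS0 => h == h1
  | IShalf, IShalf => h == IS0
  | IShalf, IS16 | IS16, IShalf => h == IS16
  | IS16, IS16 => (h == IS0) || (h == IShalf)
  end.

Definition AIS (h0 h1 h2 h3 h : IS) : bool := fusIS h2 h3 h && fusIS h1 h h0.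

Section Bcoef.
Variable R : realType.
Local Open Scope complex_scope.

Definition iC : R[i] := 'i.
(* e^{-pi i/8} = cos(pi/8) - i sin(pi/8) *)
Definition zeta : R[i] := (cos (pi / 8%:R)) -i* (sin (pi / 8%:R)).

(* [BIS h0 h1 h2 h3 h h'] = B^{h,h'}_{h0,h1,h2,h3}; the value in cases
   not covered by the definition is irrelevant (such (h,h') never occur). *)
Definition BIS (h0 h1 h2 h3 h h' : IS) : R[i] :=
  match h1, h2 with
  | IS0, _ | _, IS0 => 1
  | IShalf, IShalf => -1
  | IShalf, IS16 | IS16, IShalf =>
      if (h0 == IShalf) || (h3 == IShalf) then iC else - iC
  | IS16, IS16 =>
      if (h0 != IS16) && (h3 != IS16) then
        (if h0 == h3 then zeta else zeta * iC)
      else if (h0 == IS16) && (h3 == IS16) then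
        (if h == h' then zeta * ((1 + iC) / 2%:R) else zeta * ((1 - iC) / 2%:R))
      else 0
  end.
End Bcoef.

Definition Lam (l r : nat) : finType := ({ffun 'I_l -> IS} * {ffun 'I_r -> IS})%type.

Definition lam0 (l r : nat) : Lam l r := ([ffun => IS0], [ffun => IS0]).

Definition slam l r (lam : Lam l r) : rat :=
  \sum_(i < l) weight (lam.1 i) - \sum_(j < r) weight (lam.2 j).

Definition fusL l r (lam1 lam2 lam : Lam l r) : bool :=
  [forall i, fusIS (lam1.1 i) (lam2.1 i) (lam.1 i)] &&
  [forall j, fusIS (lam1.2 j) (lam2.2 j) (lam.2 j)].

Definition AL l r (lam0 lam1 lam2 lam3 lam : Lam l r) : bool :=
  fusL lam2 lam3 lam && fusL lam1 lam lam0.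

Definition BL (R : realType) l r (lam0 lam1 lam2 lam3 lam lam' : Lam l r) : R[i] :=
  (\prod_(i < l) BIS R (lam0.1 i) (lam1.1 i) (lam2.1 i) (lam3.1 i) (lam.1 i) (lam'.1 i)) *
  (\prod_(j < r) conjc (BIS R (lam0.2 j) (lam1.2 j) (lam2.2 j) (lam3.2 j) (lam.2 j) (lam'.2 j))).

Section Framed.
Variables (R : realType) (l r : nat) (V : vectType R[i]).
Variables (S : Lam l r -> {vspace V}) (mul : V -> V -> V) (one : V).

Definition comp (lam : Lam l r) (v : V) : V :=
  sumv_pi (\sum_(mu : Lam l r) S mu)%VS lam v.

Record framed_algebra : Prop := {
  fa_direct : directv (\sum_(mu : Lam l r) S mu);
  fa_full : (\sum_(mu : Lam l r) S mu)%VS = fullv;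
  fa_linl : forall b, linear (mul^~ b);
  fa_linr : forall a, linear (mul a);
  fa1 : forall lam, ~~ (slam lam \is a Num.int) -> S lam = 0%VS;
  fa2_one_nz : one != 0;
  fa2_S0 : S (lam0 l r) = <[one]>%VS;
  fa2_unitl : forall a, mul one a = a;
  fa2_unitr : forall a, mul a one = a;
  fa3 : forall lam1 lam2 a1 a2, a1 \in S lam1 -> a2 \in S lam2 ->
        mul a1 a2 \in (\sum_(lam | fusL lam1 lam2 lam) S lam)%VS;
  fa4 : forall lam0 lam1 lam2 lam3 lam' a1 a2 a3,
        a1 \in S lam1 -> a2 \in S lam2 -> a3 \in S lam3 ->
        AL lam0 lam2 lam1 lam3 lam' ->
        comp lam0 (mul a2 (comp lam' (mul a1 a3))) =
        \sum_(lam | AL lam0 lam1 lam2 lam3 lam)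
           BL R lam0 lam1 lam2 lam3 lam lam' *: comp lam0 (mul a1 (comp lam (mul a2 a3)))
}.

Definition graded_subspace (M : {vspace V}) : Prop :=
  M = (\sum_(lam : Lam l r) (M :&: S lam))%VS.

Definition fa_ideal (M : {vspace V}) : Prop :=
  graded_subspace M /\ forall a m, m \in M -> mul a m \in M.

Definition fa_simple : Prop :=
  forall M, fa_ideal M -> M = 0%VS \/ M = fullv.
End Framed.

(* Main.v *)
Require Import Defs.
From HB Require Import structures.
From mathcomp Require Import all_boot all_order all_algebra.
From mathcomp Require Import complex.
From mathcomp Require Import reals trigo.
Import GRing.Theory.
Local Open Scope ring_scope.

Section S.
Variables (R : realType) (l r : nat) (V : vectType R[i]).
Variables (S : Lam l r -> {vspace V}) (mul : V -> V -> V) (one : V).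
Hypothesis H : framed_algebra S mul one.

Definition mulR (a : V) : {linear V -> V} :=
  HB.pack (mul a) (GRing.isLinear.Build _ _ _ _ (mul a) (fa_linr H a)).
Definition mulLf (b : V) : {linear V -> V} :=
  HB.pack (mul^~ b) (GRing.isLinear.Build _ _ _ _ (mul^~ b) (fa_linl H b)).

Lemma mulr0' a : mul a 0 = 0.
Proof. exact: (linear0 (mulR a)). Qed.
Lemma mul_suml I (s : seq I) (P : pred I) (F : I -> V) b :
  mul (\sum_(i <- s | P i) F i) b = \sum_(i <- s | P i) mul (F i) b.
Proof. exact: (linear_sum (mulLf b)). Qed.
Lemma mul_sumr I (s : seq I) (P : pred I) (F : I -> V) a :
  mul a (\sum_(i <- s | P i) F i) = \sum_(i <- s | P i) mul a (F i).
Proof. exact: (linear_sum (mulR a)). Qed.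
Lemma comp0 lam : Defs.comp S lam 0 = 0.
Proof. rewrite /Defs.comp. exact: linear0. Qed.

Lemma compS lam v : Defs.comp S lam v \in S lam.
Proof. exact: memv_sum_pi. Qed.

Lemma comp_sum v : \sum_mu Defs.comp S mu v = v.
Proof. by apply: sumv_pi_sum; rewrite (fa_full H) memvf. Qed.

Lemma comp_uniq (u : Lam l r -> V) mu :
  (forall lam, u lam \in S lam) -> Defs.comp S mu (\sum_lam u lam) = u mu.
Proof.
move=> Su.
have e := comp_sum (\sum_lam u lam).
have := (directv_sum_unique (fa_direct H)) (fun lam => Defs.comp S lam (\sum_lam u lam)) u.
move=> /(_ (fun i _ => compS i _) (fun i _ => Su i)).
rewrite e eqxx => /esym /forall_inP /(_ mu isT) /eqP //.
Qed.

Lemma comp_outside (P : pred (Lam l r)) v lam' :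
  v \in (\sum_(lam | P lam) S lam)%VS -> ~~ P lam' -> Defs.comp S lam' v = 0.
Proof.
move=> /memv_sumP [vs Hvs ->] nP.
rewrite big_mkcond /=.
rewrite (comp_uniq (fun i => if P i then vs i else 0)).
  by rewrite (negPf nP).
by move=> lam; case: ifP => Pl; [exact: Hvs | exact: mem0v].
Qed.

Theorem main (Hs : fa_simple S mul) (lam1 lam2 : Lam l r) (a1 a2 : V) :
    a1 \in S lam1 -> a2 \in S lam2 -> mul a1 a2 = 0 ->
    a1 = 0 \/ a2 = 0.
Proof.
move=> Ha1 Ha2 H12.
pose K := lker (linfun (mulR a1)).
have memK v : (v \in K) = (mul a1 v == 0) by rewrite memv_ker lfunE.
have key nu mu a x : a \in S nu -> x \in S mu -> mul a1 x = 0 ->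
    forall lam', mul a1 (Defs.comp S lam' (mul a x)) = 0.
  move=> Ha Hx Hax lam'.
  rewrite -(comp_sum (mul a1 _)); apply: big1 => lam0 _.
  case: (boolP (AL lam0 lam1 nu mu lam')) => HA.
    rewrite (fa4 H (a1:=a) (a2:=a1) (a3:=x) (lam1:=nu) (lam2:=lam1) (lam3:=mu) Ha Ha1 Hx HA).
    apply: big1 => lam _.
    by rewrite Hax comp0 mulr0' comp0 scaler0.
  move: HA; rewrite /AL; case: (boolP (fusL nu mu lam')) => F1 /= F2.
    apply: (@comp_outside (fusL lam1 lam')) F2.
    by apply: (fa3 H) => //; exact: compS.
  rewrite (@comp_outside (fusL nu mu) (mul a x) lam') ?mulr0' ?comp0 //.
  exact: (fa3 H).
pose N := (\sum_lam (S lam :&: K))%VS.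
have NK : (N <= K)%VS by apply/subv_sumP => lam _; exact: capvSr.
have SN lam : (S lam :&: K <= N)%VS by exact: (sumv_sup lam).
have gr : graded_subspace S N.
  apply/eqP; rewrite eqEsubv; apply/andP; split; apply/subv_sumP => lam _.
    apply: (sumv_sup lam) => //; rewrite subv_cap SN capvSl //.
  exact: capvSl.
have idl : forall b m, m \in N -> mul b m \in N.
  move=> b m /memv_sumP [ms Hms ->].
  rewrite -(comp_sum b) mul_suml; apply: rpred_sum => nu _.
  rewrite mul_sumr; apply: rpred_sum => mu _.
  have /memv_capP [Hx1 Hx2] := Hms mu isT.
  rewrite -(comp_sum (mul _ _)); apply: rpred_sum => lam' _.
  apply: (subvP (SN lam')); rewrite memv_cap compS memK /=.
  apply/eqP; apply: (key nu mu) => //; first exact: compS.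
  by move: Hx2; rewrite memK => /eqP.
case: (Hs N (conj gr idl)) => HN.
  right; apply/eqP; rewrite -memv0 -HN.
  by apply: (subvP (SN lam2)); rewrite memv_cap Ha2 memK H12 eqxx.
left; have : one \in K by apply: (subvP NK); rewrite HN memvf.
by rewrite memK (fa2_unitr H) => /eqP.
Qed.
End S.

Theorem mainTheorem4 (R : realType) (l r : nat) (V : vectType R[i])
    (S : Lam l r -> {vspace V}) (mul : V -> V -> V) (one : V) :
  framed_algebra S mul one -> fa_simple S mul ->
  forall (lam1 lam2 : Lam l r) (a1 a2 : V),
    a1 \in S lam1 -> a2 \in S lam2 -> mul a1 a2 = 0 ->
    a1 = 0 \/ a2 = 0.
Proof. move=> H Hs; exact: main H Hs. Qed.
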